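(* Let $R$ be a noetherian integral domain, $n\ge1$, $R[n]=R[t]/(t^n)$, and $M$ an $R[n]$-module of finite type. Then $M$ is torsion free if and only if it is isomorphic to a submodule of a free $R[n]$-module.
   Context: An element $u=\sum_{i=0}^{n-1}u_it^i\in R[n]$ ($u_i\in R$) is a non-zero-divisor iff $u_0\ne0$; let $S_n$ be the set of non-zero-divisors. The torsion submodule $T(M)$ of $M$ is the set of $m\in M$ such that $\alpha m=0$ for some $\alpha\in S_n$; $M$ is torsion free if $T(M)=0$. *)

(* Defs.v *)
From HB Require Import structures.
From mathcomp Require Import all_boot all_order all_algebra.
Set Implicit Arguments. Unset Strict Implicit. Unset Printing Implicit Defensive.
Import Order.TTheory GRing.Theory.
Local Open Scope ring_scope.

(* R[n] = R[t]/(t^n), realized with MathComp's quotient-by-a-monic-polynomial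
   ring {poly %/ h} (qpoly.v), with h = 'X^n (monic of size n+1 > 1 for n >= 1). *)
Definition trunc_poly (R : comNzRingType) (n : nat) : comNzRingType :=
  {poly %/ ('X^n : {poly R})}.

Definition is_ideal (R : comNzRingType) (I : {pred R}) : Prop :=
  [/\ 0 \in I,
      (forall x y, x \in I -> y \in I -> x + y \in I) &
      (forall a x, x \in I -> a * x \in I)].

Definition noetherian (R : comNzRingType) : Prop :=
  forall I : {pred R}, is_ideal I ->
    exists s : seq R, all (fun x => x \in I) s /\
      forall x, x \in I -> exists c : 'I_(size s) -> R,
        x = \sum_(i < size s) c i * s`_i.

Definition non_zero_divisor (A : comNzRingType) (a : A) : Prop :=
  forall b : A, a * b = 0 -> b = 0.

Definition torsion_free (A : comNzRingType) (M : lmodType A) : Prop :=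
  forall (a : A) (m : M), non_zero_divisor a -> a *: m = 0 -> m = 0.

Definition finite_type (A : comNzRingType) (M : lmodType A) : Prop :=
  exists s : seq M, forall m : M, exists c : 'I_(size s) -> A,
    m = \sum_(i < size s) c i *: s`_i.

Definition is_free_module (A : comNzRingType) (F : lmodType A) : Prop :=
  exists (I : eqType) (b : I -> F),
    (forall (s : seq I) (c : I -> A), uniq s ->
        \sum_(i <- s) c i *: b i = 0 -> forall i, i \in s -> c i = 0) /\
    (forall v : F, exists (s : seq I) (c : I -> A),
        v = \sum_(i <- s) c i *: b i).

Definition embeds_in_free (A : comNzRingType) (M : lmodType A) : Prop :=
  exists (F : lmodType A) (f : M -> F),
    [/\ is_free_module F, linear f & injective f].

(* Main.v *)
Require Import Defs.
From mathcomp Require Import all_boot all_order all_algebra.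
From Stdlib Require Import Classical ClassicalEpsilon.
From mathcomp Require Import zify.
Set Implicit Arguments. Unset Strict Implicit. Unset Printing Implicit Defensive.
Import Order.TTheory GRing.Theory.
Local Open Scope ring_scope.

Lemma uniq_repr (A : comNzRingType) (F : lmodType A) (I : eqType) (b : I -> F)
  (s : seq I) (c : I -> A) :
  exists s' (c' : I -> A), uniq s' /\
    \sum_(i <- s) c i *: b i = \sum_(i <- s') c' i *: b i.
Proof.
elim: s => [|x s [s' [c' [Hu Hs]]]]; first by exists [::], c.
rewrite big_cons Hs.
case Hx: (x \in s').
  exists s', (fun i => if i == x then c' i + c x else c' i); split => //.
  rewrite (bigD1_seq x) //= [in RHS](bigD1_seq x) //= eqxx scalerDl.
  rewrite addrCA addrA; congr (_ + _).
  by apply: eq_bigr => i /negbTE ->.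
exists (x :: s'), (fun i => if i == x then c x else c' i); split.
  by rewrite /= Hx.
rewrite big_cons eqxx; congr (_ + _).
by apply: eq_big_seq => i Hi; case: eqP => // E; rewrite E Hx in Hi.
Qed.

Lemma free_rV (A : comNzRingType) (d : nat) : is_free_module 'rV[A]_d.
Proof.
exists ('I_d : eqType), (fun i => delta_mx 0 i); split.
  move=> s c Hu H i Hi.
  have := congr1 (fun M : 'rV[A]_d => M 0 i) H => /=.
  rewrite summxE (bigD1_seq i) //= !mxE !eqxx mulr1 big1 ?addr0 ?mxE //.
  move=> j Hj; rewrite !mxE eq_sym (negbTE Hj) andbF mulr0 //.
move=> v; exists (index_enum 'I_d), (fun j => v 0 j).
exact: row_sum_delta.
Qed.

Lemma embeds_torsion_free (A : comNzRingType) (M : lmodType A) :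
  embeds_in_free M -> torsion_free M.
Proof.
move=> [F [f [[I [b [Hind Hspan]]] Hlin Hinj]]] a m Ha Ham.
have f0 : f 0 = 0.
  have := Hlin 1 0 0; rewrite !scale1r addr0 => H.
  by apply: (@addrI _ (f 0)); rewrite addr0 -H.
have fZ : f (a *: m) = a *: f m.
  by have := Hlin a m 0; rewrite addr0 f0 addr0.
apply: Hinj; rewrite f0.
have [s [c Hv]] := Hspan (f m).
have [s' [c' [Hu Hs]]] := uniq_repr b s c.
rewrite Hv Hs in fZ *.
have H0 : \sum_(i <- s') (a * c' i) *: b i = 0.
  transitivity (a *: \sum_(i <- s') c' i *: b i).
    by rewrite scaler_sumr; apply: eq_bigr => i _; rewrite scalerA.
  by rewrite -fZ Ham f0.
rewrite big1_seq // => i /andP [_ Hi].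
by rewrite (Ha _ (Hind s' _ Hu H0 i Hi)) scale0r.
Qed.

Section Trunc.
Variable R : idomainType.
Variable k : nat.
Local Notation h := ('X^(k.+1) : {poly R}).
Local Notation A := (trunc_poly R k.+1).

Definition iota_ (r : R) : A := in_qpoly h r%:P.
Definition tT : A := in_qpoly h 'X.

Lemma mk_h : mk_monic h = 'X^(k.+1).
Proof. by rewrite mk_monic_Xn. Qed.

Lemma size_A (a : A) : (size (val a) <= k.+1)%N.
Proof.
have H := size_npoly a.
have E : (size (mk_monic h)).-1 = k.+1 by rewrite mk_h size_polyXn.
exact: (leq_trans H (eq_leq E)).
Qed.

Lemma A_val_small (p : {poly R}) : (size p <= k.+1)%N -> val (in_qpoly h p : A) = p.
Proof. by move=> H; apply: in_qpoly_small; rewrite mk_h size_polyXn. Qed.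

Lemma A_in_val (a : A) : in_qpoly h (val a) = a.
Proof. by apply: val_inj; rewrite A_val_small // size_A. Qed.

Lemma poly_small (p : {poly R}) : (size p <= k.+1)%N -> \poly_(i < k.+1) p`_i = p.
Proof.
move=> H; apply/polyP => i; rewrite coef_poly; case: ltnP => // Hi.
by rewrite nth_default // (leq_trans H Hi).
Qed.

Lemma sum_iotaT (b : nat -> R) :
  \sum_(i < k.+1) iota_ (b i) * tT ^+ i = in_qpoly h (\poly_(i < k.+1) b i).
Proof.
rewrite poly_def rmorph_sum; apply: eq_bigr => i _.
by rewrite /iota_ /tT -rmorphXn -rmorphM mul_polyC.
Qed.

Lemma coef_sum_iotaT (b : nat -> R) j : (j < k.+1)%N ->
  (val (\sum_(i < k.+1) iota_ (b i) * tT ^+ i : A))`_j = b j.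
Proof.
move=> Hj; rewrite sum_iotaT A_val_small ?coef_poly ?Hj // size_poly //.

Qed.

Lemma A_decomp (a : A) : a = \sum_(i < k.+1) iota_ ((val a)`_i) * tT ^+ i.
Proof. by rewrite sum_iotaT poly_small ?size_A // A_in_val. Qed.

Lemma iota_add r s : iota_ (r + s) = iota_ r + iota_ s.
Proof. by rewrite /iota_ polyCD rmorphD. Qed.
Lemma iota_mul r s : iota_ (r * s) = iota_ r * iota_ s.
Proof. by rewrite /iota_ polyCM rmorphM. Qed.
Lemma iota_opp r : iota_ (- r) = - iota_ r.
Proof. by rewrite /iota_ polyCN rmorphN. Qed.
Lemma iota0 : iota_ 0 = 0.
Proof. by rewrite /iota_ rmorph0. Qed.
Lemma iota1 : iota_ 1 = 1.
Proof. by rewrite /iota_ rmorph1. Qed.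

Lemma tTn : tT ^+ k.+1 = 0.
Proof.
rewrite /tT -rmorphXn; apply: val_inj => /=.
by rewrite mk_h Pdiv.RingMonic.rmodpp // monicXn.
Qed.

Lemma iota_nzd r : r != 0 -> forall b : A, iota_ r * b = 0 -> b = 0.
Proof.
move=> r0 b H.
have E : iota_ r * b = in_qpoly h (r *: val b).
  by rewrite -{1}(A_in_val b) /iota_ -rmorphM mul_polyC.
have : val (in_qpoly h (r *: val b) : A) = 0 by rewrite -E H.
rewrite A_val_small; last by rewrite (leq_trans (size_scale_leq _ _)) ?size_A.
move/eqP; rewrite scale_poly_eq0 (negbTE r0) /= => /eqP Hb.
by apply: val_inj => /=; rewrite Hb.
Qed.


Variable M : lmodType A.

Definition indep (e : seq M) := forall kk : nat -> R,
  \sum_(l < size e) iota_ (kk l) *: e`_l = 0 -> forall l, (l < size e)%N -> kk l = 0.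
Definition inspan (e : seq M) (x : M) := exists kk : nat -> R,
  x = \sum_(l < size e) iota_ (kk l) *: e`_l.

Lemma inspan0 e : inspan e 0.
Proof. by exists (fun _ => 0); rewrite big1 // => i _; rewrite iota0 scale0r. Qed.

Lemma inspanD e x y : inspan e x -> inspan e y -> inspan e (x + y).
Proof.
move=> [k1 ->] [k2 ->]; exists (fun l => k1 l + k2 l).
by rewrite -big_split; apply: eq_bigr => i _; rewrite iota_add scalerDl.
Qed.

Lemma inspanZ e a x : inspan e x -> inspan e (iota_ a *: x).
Proof.
move=> [k1 ->]; exists (fun l => a * k1 l).
by rewrite scaler_sumr; apply: eq_bigr => i _; rewrite iota_mul scalerA.
Qed.

Lemma inspan_sum e (N : nat) (F : 'I_N -> M) :
  (forall i, inspan e (F i)) -> inspan e (\sum_(i < N) F i).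
Proof.
move=> H; apply: (big_ind (inspan e)); [exact: inspan0| exact: inspanD|].
by move=> i _; exact: H.
Qed.

Lemma inspan_rcons e x z : inspan e z -> inspan (rcons e x) z.
Proof.
move=> [kk ->]; exists (fun l => if (l < size e)%N then kk l else 0).
rewrite size_rcons big_ord_recr /= ltnn iota0 scale0r addr0.
apply: eq_bigr => i _; rewrite /= ltn_ord nth_rcons ltn_ord //.
Qed.

Lemma extend_basis (w : seq M) : exists (e : seq M) (r : R),
  [/\ indep e, r != 0 & forall x, x \in w -> inspan e (iota_ r *: x)].
Proof.
elim: w => [|x w [e [r [He Hr Hw]]]].
  exists [::], 1; split; [by move=> kk _ l | exact: oner_neq0 | by []].
have [Hi|Hn] := classic (indep (rcons e x)).
  exists (rcons e x), r; split => // y; rewrite in_cons => /orP [/eqP ->|Hy].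
    exists (fun l => if l == size e then r else 0).
    rewrite size_rcons big_ord_recr /= eqxx nth_rcons ltnn eqxx big1 ?add0r //.
    by move=> i _; rewrite /= (ltn_eqF (ltn_ord i)) iota0 scale0r.
  exact: inspan_rcons (Hw y Hy).
have [kk Hkk] := not_all_ex_not _ _ Hn.
have [Hsum Hk] := imply_to_and _ _ Hkk.
have [l Hl] := not_all_ex_not _ _ Hk.
have [Hls Hkl] := imply_to_and _ _ Hl.
move: Hsum; rewrite size_rcons big_ord_recr /= nth_rcons ltnn eqxx => Hsum.
have Hs : \sum_(i < size e) iota_ (kk i) *: e`_i =
          \sum_(i < size e) iota_ (kk (widen_ord (leqnSn (size e)) i)) *:
             (rcons e x)`_(widen_ord (leqnSn (size e)) i).
  by apply: eq_bigr => i _; rewrite /= nth_rcons ltn_ord.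
rewrite -Hs in Hsum.
have Hq : kk (size e) != 0.
  apply/eqP => Hq; rewrite Hq iota0 scale0r addr0 in Hsum.
  have := He kk Hsum; rewrite size_rcons ltnS leq_eqVlt in Hls.
  case/orP: Hls => [/eqP El|Hl'] Hall; first by apply: Hkl; rewrite El.
  by apply: Hkl; apply: Hall.
exists e, (r * kk (size e)); split => //; first exact: mulf_neq0.
move=> y; rewrite in_cons => /orP [/eqP ->|Hy].
  rewrite iota_mul -scalerA.
  have -> : iota_ (kk (size e)) *: x =
    iota_ (-1) *: \sum_(i < size e) iota_ (kk i) *: e`_i.
    apply/eqP; rewrite iota_opp iota1 scaleN1r -addr_eq0 addrC Hsum //.
  by apply: inspanZ; apply: inspanZ; exists kk.
by rewrite iota_mul mulrC -scalerA; apply: inspanZ; apply: Hw.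
Qed.


Section Coords.
Variables (e : seq M) (r : R).
Hypothesis He : indep e.
Hypothesis Hspan : forall m, inspan e (iota_ r *: m).

Definition K (m : M) : nat -> R :=
  proj1_sig (constructive_indefinite_description _ (Hspan m)).

Lemma K_spec m : iota_ r *: m = \sum_(l < size e) iota_ (K m l) *: e`_l.
Proof. exact: (proj2_sig (constructive_indefinite_description _ (Hspan m))). Qed.

Lemma coord_uniq (k1 k2 : nat -> R) :
  \sum_(l < size e) iota_ (k1 l) *: e`_l = \sum_(l < size e) iota_ (k2 l) *: e`_l ->
  forall l, (l < size e)%N -> k1 l = k2 l.
Proof.
move=> H l Hl; apply/eqP; rewrite -subr_eq0; apply/eqP.
apply: (He (kk := fun l => k1 l - k2 l)) Hl.
transitivity (\sum_(l < size e) iota_ (k1 l) *: e`_l -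
              \sum_(l < size e) iota_ (k2 l) *: e`_l); last by rewrite H subrr.
rewrite -sumrB; apply: eq_bigr => i _.
by rewrite iota_add iota_opp scalerDl scaleNr.
Qed.

Lemma K_add m1 m2 l : (l < size e)%N -> K (m1 + m2) l = K m1 l + K m2 l.
Proof.
apply: (@coord_uniq (K (m1 + m2)) (fun l => K m1 l + K m2 l)).
rewrite -K_spec scalerDr !K_spec -big_split.
by apply: eq_bigr => i _; rewrite iota_add scalerDl.
Qed.

Lemma K_scale a m l : (l < size e)%N -> K (iota_ a *: m) l = a * K m l.
Proof.
apply: (@coord_uniq (K (iota_ a *: m)) (fun l => a * K m l)).
rewrite -K_spec scalerA mulrC -scalerA K_spec scaler_sumr.
by apply: eq_bigr => i _; rewrite iota_mul scalerA.
Qed.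

Lemma K0 l : (l < size e)%N -> K 0 l = 0.
Proof. by move=> Hl; rewrite -(scale0r 0) -iota0 K_scale // mul0r. Qed.

Definition phi_entry (m : M) (l : nat) : A :=
  \sum_(i < k.+1) iota_ (K (tT ^+ (k - i) *: m) l) * tT ^+ i.

Lemma phi0 l : (l < size e)%N -> phi_entry 0 l = 0.
Proof.
by move=> Hl; rewrite /phi_entry big1 // => i _; rewrite scaler0 K0 // iota0 mul0r.
Qed.

Lemma phi_add m1 m2 l : (l < size e)%N ->
  phi_entry (m1 + m2) l = phi_entry m1 l + phi_entry m2 l.
Proof.
move=> Hl; rewrite /phi_entry -big_split; apply: eq_bigr => i _.
by rewrite scalerDr K_add // iota_add mulrDl.
Qed.

Lemma phi_scale a m l : (l < size e)%N ->
  phi_entry (iota_ a *: m) l = iota_ a * phi_entry m l.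
Proof.
move=> Hl; rewrite /phi_entry mulr_sumr; apply: eq_bigr => i _.
by rewrite scalerA [tT ^+ _ * iota_ _]mulrC -scalerA K_scale // iota_mul mulrA.
Qed.

Lemma phi_T m l : (l < size e)%N -> phi_entry (tT *: m) l = tT * phi_entry m l.
Proof.
move=> Hl; rewrite /phi_entry mulr_sumr big_ord_recl big_ord_recr /=.
rewrite subn0 scalerA -exprSr tTn scale0r K0 // iota0 mul0r add0r.
rewrite mulrA mulrC mulrA -exprSr tTn mul0r addr0.
apply: eq_bigr => i _; rewrite /= scalerA -exprSr.
have -> : ((k - bump 0 i).+1 = k - i)%N by rewrite /bump /=; have := ltn_ord i; lia.
have -> : bump 0 i = i.+1 by rewrite /bump /= add1n.
by rewrite mulrCA -exprS.
Qed.

Lemma phi_Tn j m l : (l < size e)%N ->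
  phi_entry (tT ^+ j *: m) l = tT ^+ j * phi_entry m l.
Proof.
move=> Hl; elim: j => [|j IH]; first by rewrite expr0 scale1r mul1r.
by rewrite exprS -scalerA phi_T // IH mulrA.
Qed.

Lemma phi_sum (N : nat) (F : 'I_N -> M) l : (l < size e)%N ->
  phi_entry (\sum_(i < N) F i) l = \sum_(i < N) phi_entry (F i) l.
Proof.
move=> Hl.
exact: (big_morph (fun m => phi_entry m l) (fun x y => phi_add x y Hl) (phi0 Hl)).
Qed.

Lemma phi_lin a m l : (l < size e)%N -> phi_entry (a *: m) l = a * phi_entry m l.
Proof.
move=> Hl; rewrite {1}(A_decomp a) scaler_suml phi_sum //.
rewrite [in RHS](A_decomp a) mulr_suml; apply: eq_bigr => i _.
by rewrite -scalerA phi_scale // phi_Tn // mulrA.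
Qed.

Definition Phi (m : M) : 'rV[A]_(size e) := \row_(l < size e) phi_entry m l.

Lemma Phi_linear : linear Phi.
Proof. by move=> a m1 m2; apply/rowP => l; rewrite !mxE phi_add // phi_lin. Qed.

Lemma Phi_inj : torsion_free M -> r != 0 -> injective Phi.
Proof.
move=> TF Hr m1 m2 H; apply/eqP; rewrite -subr_eq0; apply/eqP.
have Hx : forall l, (l < size e)%N -> phi_entry (m1 - m2) l = 0.
  move=> l Hl; have := congr1 (fun v : 'rV[A]_(size e) => v 0 (Ordinal Hl)) H.
  by rewrite !mxE -scaleN1r phi_add // phi_lin // => ->; rewrite mulN1r subrr.
have HK : forall l, (l < size e)%N -> K (m1 - m2) l = 0.
  move=> l Hl.
  have := coef_sum_iotaT (fun i => K (tT ^+ (k - i) *: (m1 - m2)) l) (ltnSn k).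
  rewrite /= -/(phi_entry (m1 - m2) l) Hx // subnn expr0 scale1r => <-.
  by rewrite coef0.
apply: (TF (iota_ r)); first exact: iota_nzd.
rewrite K_spec big1 // => i _; by rewrite HK // iota0 scale0r.
Qed.

End Coords.

End Trunc.


Theorem proposition3p4p1 (R : idomainType) (n : nat) (M : lmodType (trunc_poly R n)) :
  noetherian R -> (1 <= n)%N -> finite_type M ->
  (torsion_free M <-> embeds_in_free M).
Proof.
move: M; case: n => [|k] M _ Hn Hfin; first by [].
split; last exact: embeds_torsion_free.
move=> TF; have [s Hs] := Hfin.
have [e [r [He Hr Hw]]] :=
  extend_basis [seq tT R k ^+ j *: y | y <- s, j <- iota 0 k.+1].
have Hspan : forall m, inspan e (iota_ k r *: m).
  move=> m; have [c ->] := Hs m.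
  rewrite scaler_sumr; apply: inspan_sum => i.
  rewrite (A_decomp (c i)) scaler_suml scaler_sumr; apply: inspan_sum => j.
  rewrite -scalerA scalerA [iota_ k r * _]mulrC -scalerA.
  apply: inspanZ; apply: Hw; apply: allpairs_f; first exact: mem_nth.
  by rewrite mem_iota add0n ltn_ord.
exists _, (Phi Hspan); split.
- exact: free_rV.
- exact: Phi_linear.
- exact: Phi_inj.
Qed.
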